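(* Let $\mathscr C\subset\mathbb R^m$ be compact, let $f:\mathscr C\to\mathbb R$ be continuous, and let $\epsilon>0$. Then there exist a positive integer $N$ and vectors $\bm u_{i,j}\in\mathbb R^{m+1}$ ($1\le j\le i\le N$) such that the polynomial $$p(\bm x)=\sum_{i=1}^N\prod_{j=1}^i\langle\check{\bm x},\bm u_{i,j}\rangle,\qquad \check{\bm x}=(\bm x,1)\in\mathbb R^{m+1},$$ satisfies $|f(\bm x)-p(\bm x)|<\epsilon$ for all $\bm x\in\mathscr C$. Moreover, if $p$ approximates $f$ within $\epsilon$ with total degree at most $k$, one may take $N=\sum_{i=0}^k\binom{m+i-1}{i}$.
   Context: $\langle\cdot,\cdot\rangle$ is the standard inner product on $\mathbb R^{m+1}$. *)

(* Defs.v *)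
From HB Require Import structures.
From mathcomp Require Import all_boot all_order all_algebra.
From mathcomp Require Import all_classical all_reals all_analysis.
Set Implicit Arguments. Unset Strict Implicit. Unset Printing Implicit Defensive.
Import Order.TTheory GRing.Theory Num.Theory.
Local Open Scope ring_scope.

Definition dotv (R : realType) (n : nat) (a b : 'rV[R]_n) : R :=
  \sum_(j < n) a 0 j * b 0 j.

Definition xcheck (R : realType) (m : nat) (x : 'rV[R]_m) : 'rV[R]_(m + 1) :=
  row_mx x (1 : 'rV[R]_1).

Definition prodpoly (R : realType) (m N : nat) (u : nat -> nat -> 'rV[R]_(m + 1))
    (x : 'rV[R]_m) : R :=
  \sum_(1 <= i < N.+1) \prod_(1 <= j < i.+1) dotv (xcheck x) (u i j).

Definition poly_deg_le (R : realType) (m k : nat) (q : 'rV[R]_m -> R) : Prop :=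
  exists c : {ffun 'I_m -> 'I_k.+1} -> R,
    forall x : 'rV[R]_m,
      q x = \sum_(a : {ffun 'I_m -> 'I_k.+1} | (\sum_(i < m) (a i : nat) <= k)%N)
              c a * \prod_(i < m) x 0 i ^+ a i.

(* Main.v *)
Require Import Defs.
From HB Require Import structures.
From mathcomp Require Import all_boot all_order all_algebra.
From mathcomp Require Import all_classical all_reals all_analysis.
From mathcomp Require Import ring lra zify.
Import Order.TTheory GRing.Theory Num.Theory.
Local Open Scope classical_set_scope.
Local Open Scope ring_scope.

Fixpoint sq_it {R : realType} (n : nat) (w : R) : R :=
  if n is n'.+1 then sq_it n' w + (w - sq_it n' w ^+ 2) / 2 else 0.

Lemma sq_it_bound (R : realType) (s : R) n : 0 <= s <= 1 ->
  0 <= sq_it n (s ^+ 2) <= s /\ s - sq_it n (s ^+ 2) <= s * (1 - s / 2) ^+ n.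
Proof.
move=> /andP[s0 s1]; elim: n => [|n [/andP[p0 ps] IH]] /=.
  by rewrite lexx s0 expr0 mulr1 subr0.
move: p0 ps IH; set p := sq_it n (s ^+ 2) => p0 ps IH.
have e1 : s - (p + (s ^+ 2 - p ^+ 2) / 2) = (s - p) * (1 - (s + p) / 2).
  by field.
have f0 : 0 <= 1 - (s + p) / 2 by lra.
have f1 : 1 - (s + p) / 2 <= 1 - s / 2 by lra.
have sp0 : 0 <= s - p by rewrite subr_ge0.
split.
  apply/andP; split.
    by apply: addr_ge0 => //; apply: divr_ge0 => //; rewrite subr_ge0 ler_sqr.
  by rewrite -subr_ge0 e1 mulr_ge0.
rewrite e1 exprSr mulrA.
apply: (@le_trans _ _ ((s - p) * (1 - s / 2))); first exact: ler_wpM2l.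
by apply: ler_wpM2r => //; lra.
Qed.

Lemma sq_it_unif (R : realType) (d : R) : 0 < d -> exists n,
  forall s : R, 0 <= s <= 1 -> `|s - sq_it n (s ^+ 2)| <= d.
Proof.
move=> d0; pose a := Num.min d 1.
have a0 : 0 < a by rewrite lt_min d0 ltr01.
have a1 : a <= 1 by rewrite ge_min lexx orbT.
have ad : a <= d by rewrite ge_min lexx.
have z1 : `|1 - a / 2| < 1.
  rewrite ger0_norm; first by rewrite ltrBlDr ltrDl divr_gt0.
  rewrite subr_ge0 ler_pdivrMr // mul1r; lra.
have := cvg_expr z1 => /fcvgrPdist_lt /(_ a a0) [N _ HN].
exists N => s /andP[s0 s1].
have [/andP[p0 ps] H] := @sq_it_bound R s N (ltac:(by rewrite s0 s1)).
rewrite ger0_norm ?subr_ge0 //.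
have {}HN := HN N (leqnn N); rewrite /= sub0r normrN in HN.
have q0 : 0 <= 1 - s / 2 by rewrite subr_ge0 ler_pdivrMr // mul1r; lra.
case: (leP s a) => sa.
  apply: le_trans H _; apply: le_trans (le_trans sa ad).
  by rewrite ler_piMr // exprn_ile1 // ?q0 // lerBlDr lerDl divr_ge0.
apply: (le_trans H); apply: le_trans ad.
apply: le_trans (ltW HN).
rewrite -[X in _ <= X]mul1r; apply: ler_pM => //; first exact: exprn_ge0.
rewrite (ger0_norm (exprn_ge0 _ _)); last first.
  by rewrite subr_ge0 ler_pdivrMr // mul1r; lra.
apply: lerXn2r; rewrite ?nnegrE //; lra.
Qed.
Section Alg.
Context (R : realType) (m : nat).
Local Notation V := 'rV[R]_m.
Local Notation W := 'rV[R]_(m + 1).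

Definition lf (v : W) (x : V) : R := dotv (xcheck x) v.
Definition gp (s : seq (seq W)) (x : V) : R :=
  \sum_(l <- s) \prod_(v <- l) lf v x.
Definition isP (g : V -> R) := exists s, forall x, g x = gp s x.

Lemma lf_row (a : V) (c : R) x :
  lf (row_mx a (const_mx c)) x = dotv x a + c.
Proof.
rewrite /lf /dotv /xcheck big_split_ord /= big_ord1; congr (_ + _).
  by apply: eq_bigr => j _; rewrite !row_mxEl.
by rewrite !row_mxEr !mxE mul1r.
Qed.

Lemma isP_ext g h : isP g -> (forall x, g x = h x) -> isP h.
Proof. by move=> [s Hs] E; exists s => x; rewrite -E. Qed.

Lemma isP_cst c : isP (fun _ => c).
Proof.
exists [:: [:: row_mx 0 (const_mx c)]] => x.
rewrite /gp big_seq1 big_seq1 lf_row /dotv big1 ?add0r // => j _.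
by rewrite mxE mulr0.
Qed.

Lemma isP_coord i : isP (fun x => x 0 i).
Proof.
exists [:: [:: row_mx (delta_mx 0 i) (const_mx 0)]] => x.
rewrite /gp big_seq1 big_seq1 lf_row addr0 /dotv (bigD1 i) //= big1.
  by rewrite mxE !eqxx mulr1 addr0.
by move=> j /negbTE ji; rewrite mxE ji andbF mulr0.
Qed.

Lemma isP_add g h : isP g -> isP h -> isP (fun x => g x + h x).
Proof.
move=> [s Hs] [t Ht]; exists (s ++ t) => x.
by rewrite /gp big_cat /= Hs Ht.
Qed.

Lemma isP_mul g h : isP g -> isP h -> isP (fun x => g x * h x).
Proof.
move=> [s Hs] [t Ht]; exists [seq l1 ++ l2 | l1 <- s, l2 <- t] => x.
rewrite /gp big_allpairs_dep Hs Ht /gp mulr_suml; apply: eq_bigr => l1 _.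
rewrite mulr_sumr; apply: eq_bigr => l2 _.
by rewrite big_cat.
Qed.

Lemma isP_scale c g : isP g -> isP (fun x => c * g x).
Proof. by move=> Hg; apply: isP_mul => //; apply: isP_cst. Qed.

Lemma isP_opp g : isP g -> isP (fun x => - g x).
Proof. move=> Hg; have := isP_ext _ _ (isP_scale (-1) g Hg). move=> H; apply: H => x. by rewrite mulN1r. Qed.

Lemma isP_sub g h : isP g -> isP h -> isP (fun x => g x - h x).
Proof. by move=> Hg Hh; apply: isP_add => //; apply: isP_opp. Qed.


Lemma lf0 x : lf 0 x = 0.
Proof. by rewrite /lf /dotv big1 // => j _; rewrite [X in _ * X]mxE mulr0. Qed.

Definition oneW : W := row_mx 0 (const_mx 1).

Lemma lf1 x : lf oneW x = 1.
Proof. by rewrite /oneW lf_row /dotv big1 ?add0r // => j _; rewrite mxE mulr0. Qed.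

Lemma gp_prodpoly s : exists N, (0 < N)%N /\
  exists u, forall x, gp s x = prodpoly N u x.
Proof.
set L := (\max_(l <- s) size l).+1; set r := size s.
pose u i j := if (L <= i < L + r)%N then
   (let l := nth [::] s (i - L) in if (j <= size l)%N then nth 0 l j.-1 else oneW)
   else 0.
exists (L + r)%N; split; first by rewrite addn_gt0.
exists u => x.
have Z i : (1 <= i)%N -> ~~ (L <= i < L + r)%N ->
    \prod_(1 <= j < i.+1) lf (u i j) x = 0.
  by move=> i1 Hi; rewrite big_ltn // /u (negbTE Hi) lf0 mul0r.
have L1 : (1 <= L)%N by [].
have LN : (L <= (L + r).+1)%N by apply: leq_trans (leq_addr r L) (leqnSn _).
rewrite /prodpoly (big_cat_nat _ (n:=L)) //=.
rewrite [X in _ + X](big_cat_nat _ (n := (L + r)%N)) //= ?leq_addr //.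
rewrite big_nat1 Z ?addr0; last 2 first.
- by apply: leq_trans (leq_addr _ _).
- by rewrite ltnn andbF.
rewrite big_nat big1 ?add0r; last first.
  move=> i /andP[i1 iL]; apply: Z => //; by rewrite leqNgt iL.
rewrite -{1}[L]add0n big_addn addKn /gp (big_nth [::]).
apply: eq_big_nat => t /andP[_ tr].
rewrite /u leq_addl (addnC t L) ltn_add2l tr /= addKn.
set l := nth [::] s t.
have kL : (size l < L)%N.
  rewrite ltnS; apply: (leq_bigmax_seq (F := size)) => //.
  by apply: mem_nth.
have kL' : ((size l).+1 <= (L + t).+1)%N.
  by rewrite ltnS (leq_trans (ltnW kL)) // leq_addr.
rewrite (big_cat_nat _ (n := (size l).+1)) //=.
rewrite [X in _ * X]big_nat [X in _ * X]big1 ?mulr1; last first.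
  by move=> j /andP[jl _]; rewrite leqNgt jl /=; exact: lf1.
rewrite big_add1 /= (big_nth 0).
apply: eq_big_nat => j /andP[_ jl].
by rewrite jl.
Qed.


Lemma isP_sq_it g n : isP g -> isP (fun x => sq_it n (g x)).
Proof.
move=> Hg; elim: n => [|n IH] /=; first exact: isP_cst.
apply: isP_add => //.
have H := isP_scale (2^-1) _ (isP_sub _ _ Hg (isP_mul _ _ IH IH)).
by apply: (isP_ext _ _ H) => x; rewrite mulrC.
Qed.

Lemma abs_approx (M d : R) : 0 < M -> 0 < d -> exists n, forall t : R,
  `|t| <= M -> `| `|t| - M * sq_it n (t ^+ 2 / M ^+ 2)| <= d.
Proof.
move=> M0 d0; have [n Hn] := @sq_it_unif R _ (divr_gt0 d0 M0).
exists n => t tM.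
have s01 : 0 <= `|t| / M <= 1.
  apply/andP; split; first by apply: divr_ge0 => //; apply: ltW.
  by rewrite ler_pdivrMr // mul1r.
have := Hn _ s01; rewrite expr_div_n real_normK ?num_real //.
move=> H.
have -> : `|t| - M * sq_it n (t ^+ 2 / M ^+ 2) =
   M * (`|t| / M - sq_it n (t ^+ 2 / M ^+ 2)).
  by field; exact: lt0r_neq0.
by rewrite normrM (gtr0_norm M0) mulrC -ler_pdivlMr.
Qed.

Context (C : set 'rV[R^o]_m).
Local Notation T := 'rV[R^o]_m.

Definition cwc (g : T -> R) := forall y, C y -> forall e : R, 0 < e ->
  \forall z \near y, C z -> `|g y - g z| < e.

Lemma cwc_ext g h : cwc g -> (forall x, g x = h x) -> cwc h.
Proof. by move=> Hg E y Cy e e0; have := Hg y Cy e e0; apply: filterS => z; rewrite !E. Qed.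

Lemma cwc_cst c : cwc (fun _ => c).
Proof. by move=> y _ e e0; apply: (@nearW _ (nbhs y) _ (nbhs_filter y)) => z _; rewrite subrr normr0. Qed.

Lemma cwc_add g h : cwc g -> cwc h -> cwc (fun x => g x + h x).
Proof.
move=> Hg Hh y Cy e e0.
have e20 : 0 < e / 2 by rewrite divr_gt0.
have := Hg y Cy _ e20; have := Hh y Cy _ e20.
apply: filterS2 => z H1 H2 Cz.
rewrite opprD addrACA; apply: le_lt_trans (ler_normD _ _) _.
rewrite (splitr e) ltrD //; [exact: H2|exact: H1].
Qed.

Lemma cwc_scale c g : cwc g -> cwc (fun x => c * g x).
Proof.
move=> Hg y Cy e e0.
have c1 : 0 < `|c| + 1 by rewrite ltr_wpDl.
have := Hg y Cy _ (divr_gt0 e0 c1); apply: filterS => z H Cz.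
rewrite -mulrBr normrM; have {}H := H Cz.
rewrite ltr_pdivlMr // in H.
apply: le_lt_trans H; rewrite mulrC ler_wpM2l //.
by rewrite lerDl.
Qed.

Lemma cwc_abs g : cwc g -> cwc (fun x => `|g x|).
Proof.
move=> Hg y Cy e e0; have := Hg y Cy _ e0; apply: filterS => z H Cz.
exact: le_lt_trans (ler_dist_dist _ _) (H Cz).
Qed.

Lemma cwc_opp g : cwc g -> cwc (fun x => - g x).
Proof. by move=> Hg; apply: (cwc_ext _ _ (cwc_scale (-1) _ Hg)) => x; rewrite mulN1r. Qed.

Lemma cwc_max g h : cwc g -> cwc h -> cwc (fun x => Num.max (g x) (h x)).
Proof.
move=> Hg Hh.
have H := cwc_scale (2^-1) _ (cwc_add _ _ (cwc_add _ _ Hg Hh)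
   (cwc_abs _ (cwc_add _ _ Hg (cwc_opp _ Hh)))).
by apply: (cwc_ext _ _ H) => x /=; rewrite maxr_absE mulrC.
Qed.

Lemma cwc_min g h : cwc g -> cwc h -> cwc (fun x => Num.min (g x) (h x)).
Proof.
move=> Hg Hh.
have H := cwc_scale (2^-1) _ (cwc_add _ _ (cwc_add _ _ Hg Hh)
   (cwc_opp _ (cwc_abs _ (cwc_add _ _ Hg (cwc_opp _ Hh))))).
by apply: (cwc_ext _ _ H) => x /=; rewrite minr_absE mulrC.
Qed.

Lemma cwc_coord i : cwc (fun x => x 0 i).
Proof.
move=> y _ e e0.
have := @coord_continuous R^o 1 m 0 i y.
move/fcvgrPdist_lt => H.
have H' : nbhs y (fun z : T => `|y 0 i - z 0 i| < e) := H (fmap_filter _ (nbhs_filter y)) e e0.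
near=> z => _; exact: (near H' z).
Unshelve. all: by end_near.
Qed.

Lemma cwc_within (f : T -> R^o) : {within C, continuous f} -> cwc f.
Proof.
move=> /subspace_continuousP Hf y Cy e e0.
by have := Hf y Cy; move/fcvgrPdist_lt => /(_ e e0).
Qed.

Lemma cover_lem (cC : compact C) (P : T -> T -> Prop) :
  (forall y, C y -> \forall z \near y, C z -> P y z) ->
  exists D : seq T, (forall y, y \in D -> C y) /\
     forall z, C z -> exists2 y, y \in D & P y z.
Proof.
move=> H; move: cC; rewrite compact_cover.
move=> /(_ T C (fun y => (fun z => C z -> P y z)°)) [].
- by move=> i _; exact: open_interior.
- by move=> z Cz; exists z => //; exact: H.
move=> D' sub cov; exists (finmap.enum_fset D'); split.
  by move=> y yD; have := sub y yD; rewrite in_setE.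
move=> z Cz; have [y yD Hy] := cov z Cz.
by exists y => //; apply: (interior_subset Hy).
Qed.

Lemma seq_bound (D : seq T) (F : T -> R) : exists M, forall y, y \in D -> F y <= M.
Proof.
elim: D => [|a D [M HM]]; first by exists 0.
exists (Num.max (F a) M) => y; rewrite inE => /orP[/eqP ->|yD].
  by rewrite le_max lexx.
by rewrite le_max HM ?orbT.
Qed.

Lemma cwc_bounded g : compact C -> cwc g -> exists M, 0 < M /\ forall x, C x -> `|g x| <= M.
Proof.
move=> cC Hg.
have [D [DC HD]] := cover_lem cC (fun y z => `|g y - g z| < 1)
  (fun y Cy => Hg y Cy 1 ltr01).
have [M HM] := seq_bound D (fun y => `|g y| + 1).
exists (Num.max M 1); split; first by rewrite lt_max ltr01 orbT.
move=> x Cx; have [y yD Hy] := HD x Cx.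
have E : g x = g y - (g y - g x) by ring.
have H1 : `|g x| <= `|g y| + 1.
  rewrite {1}E; apply: le_trans (ler_normB _ _) _.
  by rewrite lerD2l ltW.
by rewrite le_max (le_trans H1 (HM y yD)).
Qed.

Definition approx (g : T -> R) := forall e : R, 0 < e ->
  exists p, isP p /\ forall x, C x -> `|g x - p x| < e.

Lemma approx_isP g : isP g -> approx g.
Proof. by move=> Hg e e0; exists g; split => // x _; rewrite subrr normr0. Qed.

Lemma approx_ext g h : approx g -> (forall x, g x = h x) -> approx h.
Proof.
move=> Hg E e e0; have [p [Hp H]] := Hg e e0; exists p; split => // x Cx.
by rewrite -E; exact: H.
Qed.

Lemma approx_add g h : approx g -> approx h -> approx (fun x => g x + h x).
Proof.
move=> Hg Hh e e0; have e20 : 0 < e / 2 by rewrite divr_gt0.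
have [p [Hp H1]] := Hg _ e20; have [q [Hq H2]] := Hh _ e20.
exists (fun x => p x + q x); split; first exact: isP_add.
move=> x Cx; rewrite opprD addrACA; apply: le_lt_trans (ler_normD _ _) _.
by rewrite (splitr e) ltrD ?H1 ?H2.
Qed.

Lemma approx_scale c g : approx g -> approx (fun x => c * g x).
Proof.
move=> Hg e e0; have c1 : 0 < `|c| + 1 by rewrite ltr_wpDl.
have [p [Hp H]] := Hg _ (divr_gt0 e0 c1).
exists (fun x => c * p x); split; first exact: isP_scale.
move=> x Cx; rewrite -mulrBr normrM; have {}H := H x Cx.
rewrite ltr_pdivlMr // in H.
apply: le_lt_trans H; rewrite mulrC ler_wpM2l //.
by rewrite lerDl.
Qed.

Lemma approx_opp g : approx g -> approx (fun x => - g x).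
Proof. by move=> Hg; apply: (approx_ext _ _ (approx_scale (-1) _ Hg)) => x; rewrite mulN1r. Qed.

Lemma approx_abs g : compact C -> cwc g -> approx g -> approx (fun x => `|g x|).
Proof.
move=> cC Hc Hg e e0.
have [Mg [Mg0 HMg]] := cwc_bounded _ cC Hc.
have e20 : 0 < e / 2 by rewrite divr_gt0.
have e40 : 0 < e / 4 by rewrite divr_gt0.
have [p [Hp H1]] := Hg _ e20.
pose M := Mg + e / 2.
have M0 : 0 < M by rewrite addr_gt0.
have [n Hn] := abs_approx _ _ M0 e40.
pose r x := M * sq_it n (p x ^+ 2 / M ^+ 2).
exists r; split.
  apply: isP_scale; apply: isP_sq_it.
  apply: (isP_ext _ _ (isP_mul _ _ (isP_mul _ _ Hp Hp) (isP_cst (M ^+ 2)^-1))).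
  by move=> x; rewrite expr2.
move=> x Cx.
have pM : `|p x| <= M.
  have E : p x = g x - (g x - p x) by ring.
  rewrite E; apply: le_trans (ler_normB _ _) _.
  by apply: lerD; [exact: HMg| exact: ltW (H1 x Cx)].
have := Hn (p x) pM.
have A := le_lt_trans (ler_dist_dist (g x) (p x)) (H1 x Cx).
move=> B.
have E : `|g x| - r x = (`|g x| - `|p x|) + (`|p x| - r x) by ring.
rewrite E; apply: le_lt_trans (ler_normD _ _) _.
have e4 : e / 4 < e / 2 by rewrite ltr_pM2l // ltf_pV2 ?posrE // ltr_nat.
by rewrite (splitr e) ltrD // (le_lt_trans B).
Qed.

Lemma approx_max g h : compact C -> cwc g -> cwc h -> approx g -> approx h ->
  approx (fun x => Num.max (g x) (h x)).
Proof.
move=> cC cg ch Hg Hh.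
have H := approx_scale (2^-1) _ (approx_add _ _ (approx_add _ _ Hg Hh)
   (approx_abs _ cC (cwc_add _ _ cg (cwc_opp _ ch)) (approx_add _ _ Hg (approx_opp _ Hh)))).
by apply: (approx_ext _ _ H) => x /=; rewrite maxr_absE mulrC.
Qed.

Lemma approx_min g h : compact C -> cwc g -> cwc h -> approx g -> approx h ->
  approx (fun x => Num.min (g x) (h x)).
Proof.
move=> cC cg ch Hg Hh.
have H := approx_scale (2^-1) _ (approx_add _ _ (approx_add _ _ Hg Hh)
   (approx_opp _ (approx_abs _ cC (cwc_add _ _ cg (cwc_opp _ ch)) (approx_add _ _ Hg (approx_opp _ Hh))))).
by apply: (approx_ext _ _ H) => x /=; rewrite minr_absE mulrC.
Qed.

Definition GG g := cwc g /\ approx g.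

Lemma GG_max g h : compact C -> GG g -> GG h -> GG (fun x => Num.max (g x) (h x)).
Proof. by move=> cC [cg ag] [ch ah]; split; [exact: cwc_max | exact: approx_max]. Qed.

Lemma GG_min g h : compact C -> GG g -> GG h -> GG (fun x => Num.min (g x) (h x)).
Proof. by move=> cC [cg ag] [ch ah]; split; [exact: cwc_min | exact: approx_min]. Qed.

Lemma GG_isP g : isP g -> cwc g -> GG g.
Proof. by move=> Hp Hc; split => //; exact: approx_isP. Qed.

Lemma interp (f : T -> R) x y : exists h, GG h /\ h x = f x /\ h y = f y.
Proof.
have [->|xy] := eqVneq x y.
  exists (fun _ => f y); split; last by split.
  by apply: GG_isP; [exact: isP_cst | exact: cwc_cst].
have : ~ (forall i, x 0 i = y 0 i).
  by move=> H; move/eqP: xy; apply; apply/rowP => i; rewrite H.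
move/existsNP => [i /eqP Hi].
have d0 : y 0 i - x 0 i != 0 by rewrite subr_eq0 eq_sym.
pose c := (f y - f x) / (y 0 i - x 0 i).
exists (fun z => f x + c * (z 0 i - x 0 i)); split; last split.
- apply: GG_isP.
    apply: isP_add; first exact: isP_cst.
    by apply: isP_scale; apply: isP_sub; [exact: isP_coord | exact: isP_cst].
  apply: cwc_add; first exact: cwc_cst.
  by apply: cwc_scale; apply: cwc_add; [exact: cwc_coord | exact: cwc_cst].
- by rewrite subrr mulr0 addr0.
- by rewrite /c divfK // addrC subrK.
Qed.

Definition fmax (F : T -> T -> R) (b : T -> R) (D : seq T) z :=
  foldr (fun y acc => Num.max (F y z) acc) (b z) D.
Definition fmin (F : T -> T -> R) (b : T -> R) (D : seq T) z :=
  foldr (fun y acc => Num.min (F y z) acc) (b z) D.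

Lemma GG_fmax F b D : compact C -> (forall y, y \in D -> GG (F y)) -> GG b ->
  GG (fmax F b D).
Proof.
move=> cC HF Hb; elim: D HF => [|a D IH] HF //=.
apply: (GG_max (F a) (fmax F b D) cC); first by apply: HF; rewrite inE eqxx.
by apply: IH => y yD; apply: HF; rewrite inE yD orbT.
Qed.

Lemma GG_fmin F b D : compact C -> (forall y, y \in D -> GG (F y)) -> GG b ->
  GG (fmin F b D).
Proof.
move=> cC HF Hb; elim: D HF => [|a D IH] HF //=.
apply: (GG_min (F a) (fmin F b D) cC); first by apply: HF; rewrite inE eqxx.
by apply: IH => y yD; apply: HF; rewrite inE yD orbT.
Qed.

Lemma fmax_ge F b D y z : y \in D -> F y z <= fmax F b D z.
Proof.
elim: D => [|a D IH] //=; rewrite inE => /orP[/eqP ->|yD].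
  by rewrite le_max lexx.
by rewrite le_max IH ?orbT.
Qed.

Lemma fmax_eq F b D z c : (forall y, y \in D -> F y z = c) -> b z = c ->
  fmax F b D z = c.
Proof.
move=> HF bz; elim: D HF => [|a D IH] HF //=.
rewrite IH; last by move=> y yD; apply: HF; rewrite inE yD orbT.
by rewrite HF ?inE ?eqxx // maxxx.
Qed.

Lemma fmin_le F b D y z : y \in D -> fmin F b D z <= F y z.
Proof.
elim: D => [|a D IH] //=; rewrite inE => /orP[/eqP ->|yD].
  by rewrite ge_min lexx.
by rewrite ge_min IH ?orbT.
Qed.

Lemma fmin_gt F b D z c : (forall y, y \in D -> c < F y z) -> c < b z ->
  c < fmin F b D z.
Proof.
move=> HF bz; elim: D HF => [|a D IH] HF //=.
rewrite lt_min IH ?andbT; first by apply: HF; rewrite inE eqxx.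
by move=> y yD; apply: HF; rewrite inE yD orbT.
Qed.

Lemma cwc_near g y e : cwc g -> C y -> 0 < e ->
  \forall z \near y, C z -> g z < g y + e /\ g y - e < g z.
Proof.
move=> Hg Cy e0; have := Hg y Cy e e0; apply: filterS => z H Cz.
have := H Cz; rewrite ltr_norml => /andP[A B]; split; lra.
Qed.

Lemma SW (cC : compact C) (f : T -> R) : cwc f -> forall e : R, 0 < e ->
  exists g, GG g /\ forall x, C x -> `|f x - g x| < e.
Proof.
move=> Hf e e0.
have step1 : forall x, exists gx, C x ->
    GG gx /\ gx x = f x /\ forall z, C z -> f z - e < gx z.
  move=> x; have [h Hh] := choice (interp f x).
  have HC : forall y, C y -> \forall z \near y, C z -> f z - e < h y z.
    move=> y Cy; have [[ch _] [_ hy]] := Hh y.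
    have := cwc_add _ _ ch (cwc_opp _ Hf) y Cy e e0.
    apply: filterS => z H Cz; have := H Cz.
    rewrite hy subrr sub0r normrN ltr_norml => /andP[A B]; lra.
  have [D [DC HD]] := cover_lem cC (fun y z => f z - e < h y z) HC.
  exists (fmax h (h x) D) => Cx; split; last split.
  - apply: (GG_fmax h (h x) D cC); first by move=> y _; case: (Hh y).
    by case: (Hh x).
  - apply: (fmax_eq h (h x) D x (f x)) => [y _|]; first by case: (Hh y) => _ [].
    by case: (Hh x) => _ [].
  - move=> z Cz; have [y yD Hy] := HD z Cz.
    exact: (lt_le_trans Hy (fmax_ge h (h x) D y z yD)).
have [gx Hgx] := choice step1.
have [[x0 Cx0]|nC] := pselect (exists x, C x); last first.
  exists (fun _ => 0); split; first by apply: GG_isP; [exact: isP_cst|exact: cwc_cst].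
  by move=> x Cx; exfalso; apply: nC; exists x.
have HC : forall x, C x -> \forall z \near x, C z -> gx x z < f z + e.
  move=> x Cx; have [[cg _] [gxx _]] := Hgx x Cx.
  have := cwc_add _ _ cg (cwc_opp _ Hf) x Cx e e0.
  apply: filterS => z H Cz; have := H Cz.
  rewrite gxx subrr sub0r normrN ltr_norml => /andP[A B]; lra.
have [D [DC HD]] := cover_lem cC (fun x z => gx x z < f z + e) HC.
exists (fmin gx (gx x0) D); split.
  apply: (GG_fmin gx (gx x0) D cC); last by case: (Hgx x0 Cx0).
  by move=> y yD; case: (Hgx y (DC y yD)).
move=> z Cz; rewrite ltr_norml; apply/andP; split.
  have [y yD Hy] := HD z Cz.
  have := le_lt_trans (fmin_le gx (gx x0) D y z yD) Hy; lra.
have : f z - e < fmin gx (gx x0) D z.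
  apply: fmin_gt => [y yD|]; last by case: (Hgx x0 Cx0) => _ [_]; apply.
  by case: (Hgx y (DC y yD)) => _ [_]; apply.
lra.
Qed.

Lemma part1 (cC : compact C) (f : T -> R) : cwc f -> forall e : R, 0 < e ->
  exists N, (0 < N)%N /\ exists u, forall x, C x -> `|f x - prodpoly N u x| < e.
Proof.
move=> Hf e e0; have e20 : 0 < e / 2 by rewrite divr_gt0.
have [g [[_ ag] Hg]] := SW cC _ Hf _ e20.
have [p [[s Hs] Hp]] := ag _ e20.
have [N [N0 [u Hu]]] := gp_prodpoly s.
exists N; split => //; exists u => x Cx.
have E : f x - prodpoly N u x = (f x - g x) + (g x - p x) by rewrite Hs Hu; ring.
rewrite E; apply: le_lt_trans (ler_normD _ _) _.
by rewrite (splitr e) ltrD ?Hg ?Hp.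
Qed.

Lemma prod_pad (l : seq W) i x : (size l <= i)%N ->
  \prod_(1 <= j < i.+1) lf (if (j <= size l)%N then nth 0 l j.-1 else oneW) x =
  \prod_(v <- l) lf v x.
Proof.
move=> li.
have kL' : ((size l).+1 <= i.+1)%N by [].
rewrite (big_cat_nat _ (n := (size l).+1)) //=.
rewrite [X in _ * X]big_nat [X in _ * X]big1 ?mulr1; last first.
  by move=> j /andP[jl _]; rewrite leqNgt jl /=; exact: lf1.
rewrite big_add1 /= [in RHS](big_nth 0).
apply: eq_big_nat => j /andP[_ jl].
by rewrite jl.
Qed.

Lemma gp_prodpoly_gen (I : finType) (P : pred I) (Fl : I -> seq W)
   (rk : I -> nat) (N : nat) :
  {in P &, injective rk} ->
  (forall a, P a -> (size (Fl a) <= rk a)%N /\ (1 <= rk a <= N)%N) ->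
  exists u, forall x,
    \sum_(a | P a) \prod_(v <- Fl a) lf v x = prodpoly N u x.
Proof.
move=> rkI rkB.
pose u i j := if [pick a | P a & rk a == i] is Some a then
   (if (j <= size (Fl a))%N then nth 0 (Fl a) j.-1 else oneW) else 0.
exists u => x.
pose G a := \prod_(v <- Fl a) lf v x.
transitivity (\sum_(a | P a) \sum_(1 <= i < N.+1) (if rk a == i then G a else 0)).
  apply: eq_bigr => a Pa.
  have [s1 /andP[r1 rN]] := rkB a Pa.
  rewrite -big_mkcond /=.
  rewrite (eq_bigl (fun i => i == rk a)); last by move=> i; rewrite eq_sym.
  by rewrite big_nat1_eq r1 ltnS rN.
rewrite exchange_big /prodpoly; apply: eq_big_nat => i /andP[i1 _].
rewrite /u; case: pickP => [a0 /andP[Pa0 /eqP rka0] | none].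
  rewrite (bigD1 a0) //= rka0 eqxx big1 ?addr0.
    by rewrite prod_pad // -rka0; case: (rkB a0 Pa0).
  move=> a /andP[Pa na0]; case: eqP => // ra; exfalso.
  by move/negP: na0; apply; apply/eqP; apply: rkI => //; rewrite ra rka0.
rewrite big1; last first.
  by move=> a Pa; have := none a; rewrite /= Pa /= => ->.
by rewrite big_ltn // -/(lf 0 x) lf0 mul0r.
Qed.

Lemma lf_coord l x : lf (row_mx (delta_mx 0 l) (const_mx 0)) x = x 0 l.
Proof.
rewrite lf_row addr0 /dotv (bigD1 l) //= big1.
  by rewrite mxE !eqxx mulr1 addr0.
by move=> j /negbTE jl; rewrite mxE jl andbF mulr0.
Qed.

Context (k : nat).
Local Notation FF := {ffun 'I_m -> 'I_k.+1}.

Definition dg (a : FF) : nat := \sum_(i < m) (a i : nat).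
Definition keyf (a : FF) : nat := dg a * #|{: FF}| + enum_rank a.
Definition rkk (a : FF) : nat :=
  #|[set b : FF | (dg b <= k)%N && (keyf b < keyf a)%N]%SET|.+1.

Lemma keyf_inj : injective keyf.
Proof.
move=> a b E.
have H : forall z : FF, (keyf z %% #|{: FF}| = enum_rank z)%N.
  by move=> z; rewrite /keyf modnMDl modn_small // ltn_ord.
apply: enum_rank_inj; apply: val_inj => /=.
by rewrite -H E H.
Qed.

Lemma rkk_inj : {in (fun a : FF => (dg a <= k)%N) &, injective rkk}.
Proof.
have key : forall a b : FF, (dg b <= k)%N -> (keyf b < keyf a)%N -> (rkk b < rkk a)%N.
  move=> a b bk ba; rewrite /rkk ltnS; apply: proper_card.
  apply/properP; split.
    apply/fintype.subsetP => z; rewrite !inE => /andP[zk zb].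
    by rewrite zk (ltn_trans zb ba).
  by exists b; rewrite !inE ?bk ?ba ?ltnn.
move=> a b ak bk E.
have [ab|ba|] := ltngtP (keyf a) (keyf b); last exact: keyf_inj.
  by have := key b a ak ab; rewrite E ltnn.
by have := key a b bk ba; rewrite E ltnn.
Qed.

Lemma rkk_le (a : FF) : (dg a <= k)%N ->
  (rkk a <= #|[set b : FF | (dg b <= k)%N]%SET|)%N.
Proof.
move=> ak; rewrite (cardsD1 a) inE ak add1n ltnS /rkk.
apply: subset_leq_card; apply/fintype.subsetP => z; rewrite !inE => /andP[-> za].
by rewrite andbT; apply/eqP => E; rewrite E ltnn in za.
Qed.

Lemma rkk_ge (a : FF) : (dg a <= k)%N -> (dg a < rkk a)%N.
Proof.
move=> ak; rewrite /rkk ltnS.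
have [d0|dpos] := posnP (dg a); first by rewrite d0.
have /existsP [i0 _] : [exists i : 'I_m, (a i : nat) != 0%N].
  move: dpos; rewrite lt0n /dg sum_nat_eq0 negb_forall => /existsP [i Hi].
  by apply/existsP; exists i.
pose b (j : 'I_(dg a)) : FF := [ffun l => if l == i0 then inord j else ord0].
have db j : dg (b j) = j.
  rewrite /dg (bigD1 i0) //= big1 => [|l /negbTE li].
    rewrite ffunE eqxx inordK ?addn0 //.
    by rewrite ltnS (leq_trans (ltnW (ltn_ord j))).
  by rewrite ffunE li.
have binj : injective b by move=> j1 j2 E; apply: val_inj => /=; rewrite -(db j1) -(db j2) E.
rewrite -[X in (X <= _)%N]card_ord -(card_imset _ binj).
apply: subset_leq_card; apply/fintype.subsetP => z /imsetP [j _ ->]; rewrite !inE db.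
rewrite (leq_trans (ltnW (ltn_ord j))) //= /keyf db.
have ar : forall J D K r1 r2 : nat, (J < D)%N -> (r1 < K)%N ->
  (J * K + r1 < D * K + r2)%N by move=> *; nia.
by apply: ar; apply: ltn_ord.
Qed.

Lemma cardA_le :
  (#|[set b : FF | (dg b <= k)%N]%SET| <= \sum_(0 <= i < k.+1) 'C(m + i - 1, i))%N.
Proof.
have -> : (\sum_(0 <= i < k.+1) 'C(m + i - 1, i))%N = 'C(m + k, k).
  elim: k => [|k' IH]; first by rewrite big_nat1 !bin0.
  rewrite big_nat_recr //= IH addnS subn1 /= binS addnC.
  done.
pose tup (a : FF) : m.-tuple 'I_k.+1 := [tuple a i | i < m].
have tinj : injective tup.
  move=> a b E; apply/ffunP => i.
  by rewrite -(tnth_mktuple a i) -(tnth_mktuple b i) -/(tup a) E.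
rewrite -[in X in (_ <= X)%N](bin_sub (leq_addl m k)) addnK.
rewrite -(card_partial_ord_partitions m k) -(card_imset _ tinj).
apply: subset_leq_card; apply/fintype.subsetP => z /imsetP [a].
rewrite !finset.inE => ak ->.
by rewrite big_tuple; under eq_bigr do rewrite tnth_mktuple.
Qed.

Definition La (a : FF) : seq 'I_m := flatten [seq nseq (a l) l | l <- enum 'I_m].
Definition Fl (c : FF -> R) (a : FF) : seq W :=
  row_mx 0 (const_mx (c a)) :: [seq row_mx (delta_mx 0 l) (const_mx 0) | l <- La a].

Lemma size_Fl c a : size (Fl c a) = (dg a).+1.
Proof.
rewrite /= size_map size_flatten /shape -map_comp sumnE big_map.
under eq_bigr do rewrite /= size_nseq.
by rewrite big_enum.
Qed.

Lemma iter_mul (y : R) n : iter n ( *%R y) 1 = y ^+ n.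
Proof. by elim: n => [|n IH] //=; rewrite IH exprS. Qed.

Lemma prod_Fl c a x : \prod_(v <- Fl c a) lf v x = c a * \prod_(i < m) x 0 i ^+ a i.
Proof.
rewrite big_cons lf_row /dotv big1 ?add0r; last by move=> j _; rewrite [X in _ * X]mxE mulr0.
congr (_ * _); rewrite big_map.
under eq_bigr do rewrite lf_coord.
rewrite big_flatten /= big_map.
under eq_bigr do rewrite big_nseq iter_mul.
by rewrite big_enum.
Qed.

Lemma part2 (q : V -> R) : poly_deg_le k q -> exists u, forall x : V,
  q x = prodpoly (\sum_(0 <= i < k.+1) 'C(m + i - 1, i))%N u x.
Proof.
case=> c Hc.
have HB : forall a : FF, (dg a <= k)%N -> (size (Fl c a) <= rkk a)%N /\
    (1 <= rkk a <= \sum_(0 <= i < k.+1) 'C(m + i - 1, i))%N.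
  move=> a ak; rewrite size_Fl; split; first exact: rkk_ge.
  by apply/andP; split => //; exact: leq_trans (rkk_le a ak) cardA_le.
have [u Hu] := @gp_prodpoly_gen FF (fun a : FF => (dg a <= k)%N) (Fl c) rkk
   (\sum_(0 <= i < k.+1) 'C(m + i - 1, i))%N rkk_inj HB.
exists u => x; rewrite Hc -Hu; apply: eq_bigr => a _.
by rewrite prod_Fl.
Qed.
End Alg.

Theorem mainTheorem2 (R : realType) (m : nat) (C : set 'rV[R^o]_m)
    (f : 'rV[R^o]_m -> R^o) (eps : R) :
  compact C -> {within C, continuous f} -> 0 < eps ->
  (exists N : nat, (0 < N)%N /\
     exists u : nat -> nat -> 'rV[R]_(m + 1),
       forall x, C x -> `|f x - prodpoly N u x| < eps)
  /\
  (forall (k : nat) (q : 'rV[R]_m -> R), poly_deg_le k q ->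
     (forall x, C x -> `|f x - q x| < eps) ->
     exists u : nat -> nat -> 'rV[R]_(m + 1),
       forall x, C x ->
         `|f x - prodpoly (\sum_(0 <= i < k.+1) 'C(m + i - 1, i))%N u x| < eps).
Proof.
move=> cC Hf e0; split.
  exact (part1 _ _ _ cC _ (cwc_within _ _ _ _ Hf) _ e0).
move=> k q Hq Hqe; have [u Hu] := part2 _ _ _ _ Hq.
by exists u => x Cx; rewrite -Hu; exact: Hqe.
Qed.
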